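(* Let $\Lambda$ be a row-finite $k$-graph with no sources and let $\{t_\lambda\}_{\lambda\in\Lambda}$ be a representation of $C^*(\Lambda)$ with associated projection valued measure $P$. (a) If $\omega,\gamma\in\Lambda^\infty$ satisfy $\mathrm{Orbit}(\omega)=\mathrm{Orbit}(\gamma)$, then $P(\{\omega\})=0$ if and only if $P(\{\gamma\})=0$. (b) If the representation is purely atomic and $\Omega=\mathrm{supp}(P):=\{\omega\in\Lambda^\infty:P(\{\omega\})\neq0\}$, then $\Omega$ is a disjoint union of orbits, $\Omega=\bigsqcup_{\omega\in R}\mathrm{Orbit}(\omega)$ for a set $R\subseteq\Omega$ of orbit representatives, and $\bigoplus_{\omega\in R}P(\mathrm{Orbit}(\omega))=\mathrm{Id}_{\mathcal H}$.
   Context: A $k$-graph ($k\ge 1$) is a countable small category $\Lambda$ with a functor $d:\Lambda\to\mathbb N^k$ satisfying the factorization property: whenever $d(\lambda)=m+n$ there are unique $\mu,\nu$ with $\lambda=\mu\nu$, $d(\mu)=m$, $d(\nu)=n$. $\Lambda^0$ is the vertex set, $r,s$ range and source, $\Lambda^n=d^{-1}(n)$, $v\Lambda^n=\{\lambda\in\Lambda^n:r(\lambda)=v\}$; row-finite means each $v\Lambda^n$ finite, no sources means each $v\Lambda^n$ nonempty. $\Omega_k$ is the $k$-graph with objects $\mathbb N^k$, morphisms $(p,q)$ with $p\le q$, $d(p,q)=q-p$. An infinite path is a degree-preserving functor $x:\Omega_k\to\Lambda$; $\Lambda^\infty$ is the set of these. Shift: $\sigma^m(x)(p,q)=x(p+m,q+m)$.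 $\mathrm{Orbit}(\omega)=\{\gamma\in\Lambda^\infty:\sigma^m(\gamma)=\sigma^\ell(\omega)\text{ for some }m,\ell\in\mathbb N^k\}$. Cylinder sets $Z(\lambda)=\{x:x(0,d(\lambda))=\lambda\}$ generate the Borel $\sigma$-algebra. A representation of $C^*(\Lambda)$ is a family of partial isometries $\{t_\lambda\}$ on a Hilbert space $\mathcal H$ satisfying (CK1) $\{t_v\}_{v\in\Lambda^0}$ mutually orthogonal projections, (CK2) $t_\lambda t_\eta=t_{\lambda\eta}$ if $s(\lambda)=r(\eta)$, (CK3) $t_\lambda^*t_\lambda=t_{s(\lambda)}$, (CK4) $t_v=\sum_{\lambda\in v\Lambda^n}t_\lambda t_\lambda^*$. Its projection valued measure $P$ is the one on Borel sets of $\Lambda^\infty$ with $P(Z(\lambda))=t_\lambda t_\lambda^*$. The representation is purely atomic if there is a Borel $\Omega\subseteq\Lambda^\infty$ with $P(\Lambda^\infty\setminus\Omega)=0$, $P(\{\omega\})\neq0$ for $\omega\in\Omega$, and $\sum_{\omega\in\Omega}P(\{\omega\})=\mathrm{Id}$ strongly. *)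

(* Defs.v *)
From mathcomp Require Import all_boot all_algebra.
From mathcomp Require Import boolp classical_sets reals measure.
From mathcomp Require Import complex.
From Stdlib Require List.

Set Implicit Arguments.
Unset Strict Implicit.
Unset Printing Implicit Defensive.

Import GRing.Theory Num.Theory.
Local Open Scope classical_set_scope.
Local Open Scope ring_scope.

Definition NN (k : nat) := {ffun 'I_k -> nat}.
Definition zeroNN (k : nat) : NN k := [ffun => 0%N].
Definition addNN (k : nat) (m n : NN k) : NN k := [ffun i => (m i + n i)%N].

Lemma addNN_shuffle (k : nat) (p m n : NN k) :
  addNN (addNN p m) n = addNN (addNN p n) m.
Proof. by apply/ffunP => i; rewrite !ffunE -!addnA [(m i + _)%N]addnC. Qed.

(* Composition kcomp l m is meaningful when ksrc l = krng m.          *)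
Record kgraph (k : nat) := KGraph {
  kObj : Type;
  kMor : Type;
  krng : kMor -> kObj;
  ksrc : kMor -> kObj;
  kid : kObj -> kMor;
  kcomp : kMor -> kMor -> kMor;
  kdeg : kMor -> NN k;
  kObj_countable : exists f : kObj -> nat, injective f;
  kMor_countable : exists f : kMor -> nat, injective f;
  krng_id : forall v, krng (kid v) = v;
  ksrc_id : forall v, ksrc (kid v) = v;
  krng_comp : forall l m, ksrc l = krng m -> krng (kcomp l m) = krng l;
  ksrc_comp : forall l m, ksrc l = krng m -> ksrc (kcomp l m) = ksrc m;
  kcomp_idl : forall l, kcomp (kid (krng l)) l = l;
  kcomp_idr : forall l, kcomp l (kid (ksrc l)) = l;
  kcompA : forall l m n, ksrc l = krng m -> ksrc m = krng n ->
    kcomp l (kcomp m n) = kcomp (kcomp l m) n;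
  kdeg_id : forall v, kdeg (kid v) = zeroNN k;
  kdeg_comp : forall l m, ksrc l = krng m ->
    kdeg (kcomp l m) = addNN (kdeg l) (kdeg m);
  kfactor : forall l (m n : NN k), kdeg l = addNN m n ->
    exists! p : kMor * kMor,
      [/\ ksrc p.1 = krng p.2, l = kcomp p.1 p.2, kdeg p.1 = m & kdeg p.2 = n]
}.

Definition row_finite (k : nat) (L : kgraph k) :=
  forall (v : kObj L) (n : NN k), exists s : seq (kMor L),
    List.NoDup s /\ forall l, List.In l s <-> (krng l = v /\ kdeg l = n).

Definition no_sources (k : nat) (L : kgraph k) :=
  forall (v : kObj L) (n : NN k), exists l : kMor L, krng l = v /\ kdeg l = n.

(* Infinite paths: degree-preserving functors Omega_k -> Lambda.       *)
(* The morphism (p, q), p <= q, of Omega_k is encoded as (p, n) with   *)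
(* n = q - p (a bijection between Omega_k's morphisms and N^k x N^k); *)
(* x p n is the image of the morphism (p, p + n).                     *)
Definition is_infpath (k : nat) (L : kgraph k) (x : NN k -> NN k -> kMor L) :=
  [/\ forall p n, kdeg (x p n) = n,
      forall p, x p (zeroNN k) = kid (krng (x p (zeroNN k))),
      forall p n, krng (x p n) = krng (x p (zeroNN k)),
      forall p n, ksrc (x p n) = krng (x (addNN p n) (zeroNN k)) &
      forall p n n', x p (addNN n n') = kcomp (x p n) (x (addNN p n) n')].

Record infpath (k : nat) (L : kgraph k) := InfPath {
  ipf :> NN k -> NN k -> kMor L;
  ipP : is_infpath ipf }.

Lemma shift_ok (k : nat) (L : kgraph k) (m : NN k) (x : infpath L) :
  is_infpath (fun p n => x (addNN p m) n).
Proof.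
case: x => x [h1 h2 h3 h4 h5] /=; split => //.
- by move=> p n; rewrite h4 addNN_shuffle.
- by move=> p n n'; rewrite h5 addNN_shuffle.
Qed.

(* sigma^m(x)(p, q) = x(p + m, q + m) *)
Definition shift (k : nat) (L : kgraph k) (m : NN k) (x : infpath L) :
  infpath L := InfPath (shift_ok m x).

Definition Orbit (k : nat) (L : kgraph k) (w : infpath L) : set (infpath L) :=
  [set g | exists m l : NN k, shift m g = shift l w].

Definition cyl (k : nat) (L : kgraph k) (l : kMor L) : set (infpath L) :=
  [set x | x (zeroNN k) (kdeg l) = l].

Definition borel_path (k : nat) (L : kgraph k) : set (set (infpath L)) :=
  <<s [set: infpath L], [set A | exists l : kMor L, A = cyl l] >>.
Arguments borel_path {k} L.

(* ip is linear in the first variable, conjugate-linear in the second. *)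
Section Hilbert.
Variables (R : realType) (H : lmodType R[i]) (ip : H -> H -> R[i]).

(* norm convergence, stated with the squared norm ip v v *)
Definition hconv (u : nat -> H) (h : H) :=
  forall eps : R[i], 0 < eps -> exists N : nat, forall n : nat, (N <= n)%N ->
    ip (u n - h) (u n - h) < eps.

Definition hcauchy (u : nat -> H) :=
  forall eps : R[i], 0 < eps -> exists N : nat, forall n m : nat,
    (N <= n)%N -> (N <= m)%N -> ip (u n - u m) (u n - u m) < eps.

Definition is_hilbert :=
  [/\ forall a x y z, ip (a *: x + y) z = a * ip x z + ip y z,
      forall x y, ip y x = (ip x y)^*,
      forall x, 0 <= ip x x,
      forall x, ip x x = 0 -> x = 0 &
      forall u, hcauchy u -> exists h, hconv u h].

Definition zero_op : H -> H := fun _ => 0.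

Definition linear_op (T : H -> H) :=
  forall a x y, T (a *: x + y) = a *: T x + T y.

Definition bounded_op (T : H -> H) :=
  exists c : R[i], forall x, ip (T x) (T x) <= c * ip x x.

Definition adjoint_of (T S : H -> H) := forall x y, ip (T x) y = ip x (S y).

(* unordered (net) sum over a possibly uncountable index set S:
   sum_{i in S} f i = h in norm *)
Definition hsum_to (I : Type) (S : set I) (f : I -> H) (h : H) :=
  forall eps : R[i], 0 < eps -> exists s0 : seq I,
    [/\ List.NoDup s0, (forall i, List.In i s0 -> S i) &
      forall s : seq I, List.NoDup s -> (forall i, List.In i s -> S i) ->
        (forall i, List.In i s0 -> List.In i s) ->
        ip (\sum_(i <- s) f i - h) (\sum_(i <- s) f i - h) < eps].

Definition is_PVM (T : Type) (M : set (set T)) (P : set T -> H -> H) :=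
  [/\ forall A, M A ->
        [/\ linear_op (P A), P A \o P A = P A & adjoint_of (P A) (P A)],
      P setT = id /\ P set0 = zero_op,
      forall A B, M A -> M B -> P (A `&` B) = P A \o P B &
      forall F : nat -> set T, (forall n, M (F n)) -> trivIset setT F ->
        forall h, hconv (fun N => \sum_(i < N) P (F i) h)
                        (P (\bigcup_n F n) h)].

End Hilbert.
Arguments zero_op {R H}.

Definition is_krep (k : nat) (L : kgraph k) (R : realType) (H : lmodType R[i])
    (ip : H -> H -> R[i]) (t ts : kMor L -> H -> H) :=
  [/\
      forall l, [/\ linear_op (t l), bounded_op ip (t l),
                    adjoint_of ip (t l) (ts l) & t l \o ts l \o t l = t l],
      (forall v, t (kid v) \o t (kid v) = t (kid v) /\ ts (kid v) = t (kid v))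
      /\ (forall v w, v <> w -> t (kid v) \o t (kid w) = zero_op (H:=H)),
      forall l m, ksrc l = krng m -> t (kcomp l m) = t l \o t m,
      forall l, ts l \o t l = t (kid (ksrc l)) &
      forall (v : kObj L) (n : NN k), exists s : seq (kMor L),
        [/\ List.NoDup s, forall l, List.In l s <-> (krng l = v /\ kdeg l = n) &
            t (kid v) = (fun h => \sum_(l <- s) t l (ts l h))]].

Definition assoc_PVM (k : nat) (L : kgraph k) (R : realType) (H : lmodType R[i])
    (ip : H -> H -> R[i]) (t ts : kMor L -> H -> H)
    (P : set (infpath L) -> H -> H) :=
  is_PVM ip (borel_path L) P /\ forall l, P (cyl l) = t l \o ts l.

Definition purely_atomic (k : nat) (L : kgraph k) (R : realType)
    (H : lmodType R[i]) (ip : H -> H -> R[i]) (P : set (infpath L) -> H -> H) :=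
  exists Om : set (infpath L),
    [/\ borel_path L Om, P (~` Om) = zero_op (H:=H),
        forall w, Om w -> P [set w] <> zero_op (H:=H) &
        forall h, hsum_to ip Om (fun w => P [set w] h) h].

(* Main.v *)
Require Import Defs.
From mathcomp Require Import all_boot all_order all_algebra.
From mathcomp Require Import boolp classical_sets reals measure.
From mathcomp Require Import complex.
From mathcomp Require Import ring.
Import Order.TTheory GRing.Theory Num.Theory.
Set Implicit Arguments.
Unset Strict Implicit.
Unset Printing Implicit Defensive.
Local Open Scope classical_set_scope.
Local Open Scope ring_scope.

Section Hil.
Variables (R : realType) (H : lmodType R[i]) (ip : H -> H -> R[i]).
Hypothesis hH : is_hilbert ip.

Lemma ipD1 x y z : ip (x + y) z = ip x z + ip y z.
Proof. by case: hH => h _ _ _ _; have := h 1 x y z; rewrite scale1r mul1r. Qed.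
Lemma ip0l z : ip 0 z = 0.
Proof. by have := ipD1 0 0 z; rewrite addr0 => h; apply: (addrI (ip 0 z)); rewrite addr0 -h. Qed.
Lemma ipN1 x z : ip (- x) z = - ip x z.
Proof. by case: hH => h _ _ _ _; have := h (-1) x 0 z; rewrite scaleN1r addr0 ip0l addr0 mulN1r. Qed.
Lemma ipB1 x y z : ip (x - y) z = ip x z - ip y z.
Proof. by rewrite ipD1 ipN1. Qed.
Lemma ipC x y : ip x y = (ip y x)^*.
Proof. by case: hH => _ h _ _ _; rewrite h. Qed.
Lemma cjD (a b : R[i]) : (a + b)^* = a^* + b^*. Proof. exact: rmorphD. Qed.
Lemma cjN (a : R[i]) : (- a)^* = - a^*. Proof. exact: rmorphN. Qed.
Lemma cj0 : (0 : R[i])^* = 0. Proof. exact: rmorph0. Qed.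
Lemma ipD2 x y z : ip z (x + y) = ip z x + ip z y.
Proof. by rewrite ipC ipD1 cjD -!ipC. Qed.
Lemma ipN2 x z : ip z (- x) = - ip z x.
Proof. by rewrite ipC ipN1 cjN -ipC. Qed.
Lemma ipB2 x y z : ip z (x - y) = ip z x - ip z y.
Proof. by rewrite ipD2 ipN2. Qed.
Lemma ip0r z : ip z 0 = 0.
Proof. by rewrite ipC ip0l cj0. Qed.
Lemma ip_ge0 x : 0 <= ip x x.
Proof. by case: hH. Qed.
Lemma ip_eq0 x : ip x x = 0 -> x = 0.
Proof. by case: hH => _ _ _ h _; apply: h. Qed.
Lemma ipNN x : ip (- x) (- x) = ip x x.
Proof. by rewrite ipN1 ipN2 opprK. Qed.

Lemma ip_par a b : ip (a + b) (a + b) <= ip a a + ip a a + (ip b b + ip b b).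
Proof.
rewrite -subr_ge0.
have -> : ip a a + ip a a + (ip b b + ip b b) - ip (a + b) (a + b) = ip (a - b) (a - b).
  rewrite !ipD1 !ipD2 !ipN1 !ipN2; ring.
exact: ip_ge0.
Qed.

Lemma ip_ext u v : (forall x, ip x u = ip x v) -> u = v.
Proof.
move=> E; apply/eqP; rewrite -subr_eq0; apply/eqP; apply: ip_eq0.
by rewrite ipB2 E subrr.
Qed.

Lemma hconv_uniq u a b : hconv ip u a -> hconv ip u b -> a = b.
Proof.
move=> ha hb; set d := ip (a - b) (a - b).
have [d0|dn0] := eqVneq d 0.
  by apply/eqP; rewrite -subr_eq0; apply/eqP; apply: ip_eq0.
have dpos : 0 < d by rewrite lt_def dn0 ip_ge0.
set e := d / 4%:R.
have epos : 0 < e by rewrite divr_gt0 // ltr0n.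
have [N1 h1] := ha e epos; have [N2 h2] := hb e epos.
have n1 := h1 (maxn N1 N2) (leq_maxl _ _); have n2 := h2 _ (leq_maxr N1 N2).
move: n1 n2; set v := u (maxn N1 N2) => n1 n2.
have E : a - b = (v - b) + - (v - a) by rewrite opprB [RHS]addrC addrA subrK.
have := ip_par (v - b) (- (v - a)); rewrite -E ipNN -/d => hd.
have : d < e + e + (e + e) by apply: (le_lt_trans hd); apply: ltrD; apply: ltrD.
have -> : e + e + (e + e) = d by rewrite /e; field.
by rewrite ltxx.
Qed.

Lemma hconv_ev u a b N0 : hconv ip u a -> (forall n, (N0 <= n)%N -> u n = b) -> a = b.
Proof.
move=> ha hu; apply: (hconv_uniq ha) => eps eps0; exists N0 => n hn.
by rewrite hu // subrr ip0l.
Qed.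

Lemma hconv_ext u v a : (forall n, u n = v n) -> hconv ip u a -> hconv ip v a.
Proof. by move=> E hu eps e0; have [N hN] := hu eps e0; exists N => n hn; rewrite -E; apply: hN. Qed.

Lemma hconv_lin (T : H -> H) K u a : 0 < K -> (forall x y, T (x - y) = T x - T y) ->
  (forall x, ip (T x) (T x) <= K * ip x x) -> hconv ip u a ->
  hconv ip (fun n => T (u n)) (T a).
Proof.
move=> K0 TB Tb hu eps e0.
have [N hN] := hu (eps / K) (divr_gt0 e0 K0).
exists N => n hn; rewrite -TB; apply: (le_lt_trans (Tb _)).
rewrite -subr_gt0.
have -> : eps - K * ip (u n - a) (u n - a) = K * (eps / K - ip (u n - a) (u n - a)).
  by field; rewrite lt0r_neq0.
by rewrite mulr_gt0 // subr_gt0; apply: hN.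
Qed.

Lemma lin_sub (T : H -> H) : linear_op T -> forall x y, T (x - y) = T x - T y.
Proof.
move=> L.
have T0 : T 0 = 0.
  have h := L 1 0 0; rewrite scale1r addr0 scale1r in h.
  by apply: (addrI (T 0)); rewrite addr0 -h.
have TN : forall y, T (- y) = - T y.
  by move=> y; have := L (-1) y 0; rewrite scaleN1r addr0 T0 addr0 scaleN1r.
by move=> x y; have := L 1 x (- y); rewrite scale1r scale1r TN.
Qed.

Lemma bounded_pos (T : H -> H) : bounded_op ip T ->
  exists K, 0 < K /\ forall x, ip (T x) (T x) <= K * ip x x.
Proof.
case=> c hc; exists (`|c| + 1); split; first by rewrite ltr_pwDr // ltr01.
move=> x; apply: (le_trans (hc x)).
have hr : c * ip x x \is Num.real.
  have -> : c * ip x x = (c * ip x x - ip (T x) (T x)) + ip (T x) (T x) by rewrite subrK.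
  by rewrite realD // ger0_real // ?subr_ge0 // ip_ge0.
apply: (le_trans (real_ler_norm hr)).
rewrite normrM (ger0_norm (ip_ge0 x)) -subr_ge0.
have -> : (`|c| + 1) * ip x x - `|c| * ip x x = ip x x by ring.
exact: ip_ge0.
Qed.

Lemma proj_contr (Q : H -> H) : (forall v, Q (Q v) = Q v) -> adjoint_of ip Q Q ->
  forall v, ip (Q v) (Q v) <= ip v v.
Proof.
move=> Qi Qa v; rewrite -subr_ge0.
have h1 : ip (Q v) v = ip (Q v) (Q v) by rewrite -{1}Qi Qa.
have h2 : ip v (Q v) = ip (Q v) (Q v) by rewrite -Qa.
have -> : ip v v - ip (Q v) (Q v) = ip (v - Q v) (v - Q v).
  by rewrite ipB1 !ipB2 h1 h2; ring.
exact: ip_ge0.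
Qed.

End Hil.

Section PVM.
Variables (R : realType) (H : lmodType R[i]) (ip : H -> H -> R[i]).
Hypothesis hH : is_hilbert ip.
Variables (T : Type) (M : set (set T)) (P : set T -> H -> H).
Hypothesis hM : sigma_algebra setT M.
Hypothesis hP : is_PVM ip M P.

Lemma M0 : M set0. Proof. by case: hM. Qed.
Lemma MC A : M A -> M (~` A). Proof. by case: hM => _ h _ /h; rewrite setTD. Qed.
Lemma Mbig (F : nat -> set T) : (forall n, M (F n)) -> M (\bigcup_n F n).
Proof. by case: hM => _ _ h; apply: h. Qed.

Definition two (A B : set T) (n : nat) : set T :=
  match n with 0 => A | 1 => B | _ => set0 end.
Lemma bigcup_two A B : \bigcup_n two A B n = A `|` B.
Proof.
apply/seteqP; split => z.
  by case=> -[|[|n]] _ /= h; [left|right|].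
by case=> h; [exists 0%N | exists 1%N].
Qed.
Lemma MU A B : M A -> M B -> M (A `|` B).
Proof. by move=> hA hB; rewrite -bigcup_two; apply: Mbig => -[|[|n]] //=; exact: M0. Qed.
Lemma MI A B : M A -> M B -> M (A `&` B).
Proof. by move=> hA hB; rewrite -[A `&` B]setCK setCI; apply/MC/MU; apply: MC. Qed.
Lemma MD A B : M A -> M B -> M (A `\` B).
Proof. by move=> hA hB; rewrite setDE; apply: MI => //; apply: MC. Qed.
Lemma MT : M setT. Proof. by rewrite -setC0; apply/MC/M0. Qed.
Lemma Mcap (F : nat -> set T) : (forall n, M (F n)) -> M (\bigcap_n F n).
Proof.
move=> hF; rewrite -[X in M X]setCK setC_bigcap; apply/MC/Mbig => n; exact/MC.
Qed.

Lemma P_lin A : M A -> linear_op (P A). Proof. by case: hP => h _ _ _ /h []. Qed.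
Lemma P_idem A : M A -> forall v, P A (P A v) = P A v.
Proof. by case: hP => h _ _ _ /h [_ e _] v; exact: (congr1 (fun f => f v) e). Qed.
Lemma P_adj A : M A -> adjoint_of ip (P A) (P A). Proof. by case: hP => h _ _ _ /h []. Qed.
Lemma P_sub A : M A -> forall x y, P A (x - y) = P A x - P A y.
Proof. by move=> hA; apply: lin_sub; apply: P_lin. Qed.
Lemma P_contr A : M A -> forall v, ip (P A v) (P A v) <= ip v v.
Proof. by move=> hA; apply: proj_contr => //; [apply: P_idem | apply: P_adj]. Qed.
Lemma P_hconv A u a : M A -> hconv ip u a -> hconv ip (fun n => P A (u n)) (P A a).
Proof.
move=> hA; apply: (hconv_lin (K := 1)); first exact: ltr01.
  exact: P_sub.
by move=> x; rewrite mul1r; apply: P_contr.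
Qed.
Lemma P0 h : P set0 h = 0. Proof. by case: hP => _ [_ ->] _ _. Qed.
Lemma PT h : P setT h = h. Proof. by case: hP => _ [-> _] _ _. Qed.
Lemma PI A B : M A -> M B -> P (A `&` B) = P A \o P B.
Proof. by case: hP => _ _ h _; apply: h. Qed.
Lemma Psub A B : M A -> M B -> A `<=` B -> forall h, P A h = P A (P B h).
Proof. by move=> hA hB AB h; have := PI hA hB; rewrite setIidl // => E; rewrite {1}E. Qed.

Lemma PU A B : M A -> M B -> A `&` B = set0 -> forall h, P (A `|` B) h = P A h + P B h.
Proof.
move=> hA hB AB h.
case: hP => _ _ _ /(_ (two A B)) hc.
have := hc _ _ h; rewrite bigcup_two => hc'.
apply: (hconv_ev hH (N0 := 2)) ; first apply: hc'.
- by move=> -[|[|n]] //=; exact: M0.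
- move=> i j _ _ [z [hi hj]]; move: i j hi hj => [|[|i]] [|[|j]] //= hi hj;
  by move: (AB) => /seteqP [/(_ z) + _]; rewrite /=; move=> /(_ (conj hi hj)) || move=> /(_ (conj hj hi)).
move=> [|[|n]] // _.
rewrite big_ord_recl big_ord_recl /= big1 ?addr0 // => i _; exact: P0.
Qed.


Lemma PD A B : M A -> M B -> B `<=` A -> forall h, P (A `\` B) h = P A h - P B h.
Proof.
move=> hA hB BA h.
have D : (A `\` B) `&` B = set0 by rewrite setDE -setIA setICl setI0.
have E := PU (MD hA hB) hB D h; rewrite setDKU // in E.
by rewrite E addrK.
Qed.

Lemma PC A : M A -> forall h, P (~` A) h = h - P A h.
Proof.
move=> hA h; rewrite -{2}(PT h) -(setUCr A) (PU hA (MC hA)) ?setICr //.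
by rewrite [P A h + _]addrC addrK.
Qed.

Lemma hconv_shift c v a : hconv ip (fun n => c - v n) (c - a) -> hconv ip v a.
Proof.
move=> hc eps e0; have [N hN] := hc eps e0; exists N => n hn.
have E : c - v n - (c - a) = - (v n - a).
  by rewrite !opprB [_ + (a - c)]addrC addrA subrK.
by have := hN n hn; rewrite E ipNN.
Qed.

Lemma PDEC (Z : nat -> set T) h : (forall n, M (Z n)) -> (forall n, Z n.+1 `<=` Z n) ->
  hconv ip (fun N => P (Z N) h) (P (\bigcap_i Z i) h).
Proof.
move=> hZ dZ.
have dec : forall i j, (i <= j)%N -> Z j `<=` Z i.
  move=> i j; elim: j => [|j IH]; first by rewrite leqn0 => /eqP ->.
  rewrite leq_eqVlt => /orP [/eqP -> //| ]; rewrite ltnS => /IH; exact: subset_trans (dZ j).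
set F := fun i => Z i `\` Z i.+1.
have hF : forall n, M (F n) by move=> n; apply: MD.
have tF : trivIset setT F.
  move=> i j _ _ [z [[zi nzi] [zj nzj]]].
  have [ij|ji|//] := ltngtP i j.
    by exfalso; apply: nzi; apply: (dec i.+1 j) => //.
  by exfalso; apply: nzj; apply: (dec j.+1 i) => //.
case: hP => _ _ _ /(_ F hF tF h) hc.
have UF : \bigcup_n F n = Z 0%N `\` \bigcap_i Z i.
  apply/seteqP; split => z.
    case=> i _ [zi nzi]; split; first exact: (dec 0%N i).
    by move=> /(_ i.+1 I).
  case=> z0 nz; have [J nJ] : exists J, ~ Z J z.
    by apply/existsNP => hz; apply: nz => i _; apply: hz.
  elim: J nJ => [//|J IH] nJ.
  have [zJ|nzJ] := pselect (Z J z); last exact: IH.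
  by exists J.
have sub0 : \bigcap_i Z i `<=` Z 0%N by move=> z /(_ 0%N I).
rewrite UF (PD (hZ 0%N) (Mcap hZ) sub0) in hc.
apply: (@hconv_shift (P (Z 0%N) h)).
apply: hconv_ext hc => N; elim: N => [|N IH]; first by rewrite big_ord0 subrr.
by rewrite big_ord_recr /= IH PD // addrA subrK.
Qed.

Fixpoint Ufold (I : Type) (f : I -> set T) (s : seq I) : set T :=
  if s is a :: s' then f a `|` Ufold f s' else set0.

Lemma Ufold_in I (f : I -> set T) s z : Ufold f s z <-> exists i, List.In i s /\ f i z.
Proof.
elim: s => [|a s IH] /=; first by split => [[]|[i [[] _]]].
split.
  by case=> [fz|/IH [i [si fi]]]; [exists a; split; [left|] | exists i; split; [right|]].
case=> i [[<-|si] fi]; [by left | right; apply/IH; by exists i].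
Qed.

Lemma MUfold I (f : I -> set T) s : (forall i, List.In i s -> M (f i)) -> M (Ufold f s).
Proof.
elim: s => [|a s IH] hs /=; first exact: M0.
by apply: MU; [apply: hs; left | apply: IH => i si; apply: hs; right].
Qed.

Lemma PUfold I (f : I -> set T) s : List.NoDup s -> (forall i, List.In i s -> M (f i)) ->
  (forall i j, List.In i s -> List.In j s -> i <> j -> f i `&` f j = set0) ->
  forall h, \sum_(i <- s) P (f i) h = P (Ufold f s) h.
Proof.
elim: s => [|a s IH] nd hs hd h; first by rewrite big_nil /= P0.
move/List.NoDup_cons_iff: nd => [nas nds].
rewrite big_cons IH //; last 2 first.
- by move=> i si; apply: hs; right.
- by move=> i j si sj; apply: hd; right.
rewrite /= PU //; first by apply: hs; left.
  by apply: MUfold => i si; apply: hs; right.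
apply/seteqP; split => // z [fa /Ufold_in [i [si fi]]].
have ai : a <> i by move=> ai; apply: nas; rewrite ai.
have := hd a i (or_introl erefl) (or_intror si) ai.
by move/seteqP => [/(_ z (conj fa fi))].
Qed.

End PVM.

Section Graph.
Variables (k : nat) (L : kgraph k).
Local Notation O0 := (zeroNN k).

Lemma add0NN (n : NN k) : addNN O0 n = n. Proof. by apply/ffunP => i; rewrite !ffunE. Qed.
Lemma addNN0 (n : NN k) : addNN n O0 = n. Proof. by apply/ffunP => i; rewrite !ffunE addn0. Qed.
Lemma addNNC (m n : NN k) : addNN m n = addNN n m. Proof. by apply/ffunP => i; rewrite !ffunE addnC. Qed.
Lemma addNNA (m n p : NN k) : addNN m (addNN n p) = addNN (addNN m n) p.
Proof. by apply/ffunP => i; rewrite !ffunE addnA. Qed.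
Definition cNN (j : nat) : NN k := [ffun => j].

Lemma ip_deg (x : infpath L) p n : kdeg (x p n) = n.
Proof. by case: x => x [h1 h2 h3 h4 h5]. Qed.
Lemma ip_rng (x : infpath L) p n : krng (x p n) = krng (x p O0).
Proof. by case: x => x [h1 h2 h3 h4 h5]. Qed.
Lemma ip_src (x : infpath L) p n n' : ksrc (x p n) = krng (x (addNN p n) n').
Proof. by case: x => x [h1 h2 h3 h4 h5] /=; rewrite h4 h3. Qed.
Lemma ip_comp (x : infpath L) p n n' : x p (addNN n n') = kcomp (x p n) (x (addNN p n) n').
Proof. by case: x => x [h1 h2 h3 h4 h5]. Qed.

Lemma factor_uniq (x y : infpath L) p q r : x p (addNN q r) = y p (addNN q r) ->
  x p q = y p q /\ x (addNN p q) r = y (addNN p q) r.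
Proof.
move=> E.
have [[a b] [_ U]] := kfactor (ip_deg y p (addNN q r)).
have e1 : (a, b) = (x p q, x (addNN p q) r).
  by apply: U; split => //=; [exact: ip_src | rewrite -E ip_comp | exact: ip_deg | exact: ip_deg].
have e2 : (a, b) = (y p q, y (addNN p q) r).
  by apply: U; split => //=; [exact: ip_src | rewrite ip_comp | exact: ip_deg | exact: ip_deg].
by rewrite e1 in e2; case: e2.
Qed.

Lemma infpath_ext (x y : infpath L) : (forall p n, x p n = y p n) -> x = y.
Proof.
case: x y => [x hx] [y hy] /= E.
have e : x = y by apply: funext => p; apply: funext => n; apply: E.
subst; congr InfPath; exact: Prop_irrelevance.
Qed.

Lemma ext0 (x y : infpath L) : (forall q, x O0 q = y O0 q) -> x = y.
Proof.
move=> E; apply: infpath_ext => p n.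
by have [_] := factor_uniq (E (addNN p n)); rewrite add0NN.
Qed.

Lemma prefix (x y : infpath L) p q r : x p (addNN q r) = y p (addNN q r) -> x p q = y p q.
Proof. by case/factor_uniq. Qed.

Definition Zs (b : NN k) (y : infpath L) (j : nat) := cyl (y O0 (addNN b (cNN j))).

Lemma Zs_in b y j z : Zs b y j z <-> z O0 (addNN b (cNN j)) = y O0 (addNN b (cNN j)).
Proof. by rewrite /Zs /cyl /= ip_deg. Qed.

Lemma Zs_dec b y j : Zs b y j.+1 `<=` Zs b y j.
Proof.
move=> z /Zs_in E; apply/Zs_in.
have e : addNN b (cNN j.+1) = addNN (addNN b (cNN j)) (cNN 1).
  by apply/ffunP => i; rewrite !ffunE addn1 addnS.
by rewrite e in E; apply: prefix E.
Qed.

Lemma Zs_cap b y : \bigcap_j Zs b y j = [set y].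
Proof.
apply/seteqP; split => z; last by move=> -> j _; apply/Zs_in.
move=> hz; apply: ext0 => q.
set j := (\max_i q i)%N.
set r : NN k := [ffun i => (b i + j - q i)%N].
have e : addNN b (cNN j) = addNN q r.
  apply/ffunP => i; rewrite !ffunE subnKC //.
  by apply: leq_trans (leq_bigmax i) (leq_addl _ _).
by have := hz j I; move/Zs_in; rewrite e; apply: prefix.
Qed.

Lemma shift_shift a b (x : infpath L) : shift a (shift b x) = shift (addNN a b) x.
Proof. by apply: infpath_ext => p n /=; rewrite addNNA. Qed.

Lemma orbit_refl (w : infpath L) : Orbit w w.
Proof. by exists O0, O0. Qed.
Lemma orbit_sym (w g : infpath L) : Orbit w g -> Orbit g w.
Proof. by case=> m [l e]; exists l, m. Qed.
Lemma orbit_trans (u w g : infpath L) : Orbit w g -> Orbit u w -> Orbit u g.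
Proof.
case=> m [l e] [m' [l' e']]; exists (addNN m' m), (addNN l l').
rewrite -shift_shift e shift_shift addNNC -shift_shift e' shift_shift //.
Qed.
Lemma orbit_eq (w g : infpath L) : Orbit w g -> Orbit g = Orbit w.
Proof.
move=> wg; apply/seteqP; split => z.
  by move=> gz; apply: orbit_trans gz wg.
by move=> wz; apply: orbit_trans wz (orbit_sym wg).
Qed.

Notation BL := (borel_path L).
Lemma BL_sa : sigma_algebra setT BL. Proof. exact: smallest_sigma_algebra. Qed.
Lemma Mcyl l : BL (cyl l). Proof. by apply: sub_sigma_algebra; exists l. Qed.
Lemma Msing y : BL [set y].
Proof. rewrite -(Zs_cap O0 y); apply: (Mcap BL_sa) => j; exact: Mcyl. Qed.

Lemma Morbit w : BL (Orbit w).
Proof.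
have [f finj] := kMor_countable L.
pose C := ({ffun 'I_k -> nat} * {ffun 'I_k -> nat} * nat)%type.
pose Tn (n : nat) := [set g : infpath L | exists (m l : NN k) (a : kMor L),
  unpickle n = Some ((m, l, f a) : C) /\ g O0 m = a /\ shift m g = shift l w].
have E : Orbit w = \bigcup_n Tn n.
  apply/seteqP; split => g.
    case=> m [l e]; exists (pickle ((m, l, f (g O0 m)) : C)) => //.
    by exists m, l, (g O0 m); rewrite pickleK.
  by case=> n _ [m [l [a [_ [_ e]]]]]; exists m, l.
rewrite E; apply: (Mbig BL_sa) => n.
have [[g Tg]|nT] := pselect (exists g, Tn n g); last first.
  have -> : Tn n = set0 by apply/seteqP; split => // z Tz; apply: nT; exists z.
  exact: (M0 BL_sa).
suff -> : Tn n = [set g] by apply: Msing.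
apply/seteqP; split => z; last by move=> ->.
move: Tg => [m [l [a [ea [ga sg]]]]] [m' [l' [a' [ea' [ga' sg']]]]].
rewrite ea' in ea; case: ea => em el ef.
have ea : a' = a by apply: finj.
subst m' l' a'.
apply: ext0 => q.
have e2 : z O0 (addNN m q) = g O0 (addNN m q).
  rewrite !ip_comp ga ea; congr kcomp.
  have := congr1 (fun x : infpath L => x O0 q) sg; have := congr1 (fun x : infpath L => x O0 q) sg'.
  by rewrite /= => -> ->.
by rewrite addNNC in e2; apply: prefix e2.
Qed.

End Graph.

Section Key.
Variables (k : nat) (L : kgraph k) (R : realType) (H : lmodType R[i]) (ip : H -> H -> R[i])
  (t ts : kMor L -> H -> H) (P : set (infpath L) -> H -> H).
Hypotheses (hH : is_hilbert ip) (hK : is_krep ip t ts) (hA : assoc_PVM ip t ts P).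
Local Notation O0 := (zeroNN k).
Local Notation BL := (borel_path L).

Lemma hPVM : is_PVM ip BL P. Proof. by case: hA. Qed.
Lemma Pcyl l : P (cyl l) = t l \o ts l. Proof. by case: hA. Qed.
Lemma t_lin l : linear_op (t l). Proof. by case: hK => /(_ l) []. Qed.
Lemma t_bnd l : bounded_op ip (t l). Proof. by case: hK => /(_ l) []. Qed.
Lemma t_adj l : adjoint_of ip (t l) (ts l). Proof. by case: hK => /(_ l) []. Qed.
Lemma t_pi l : t l \o ts l \o t l = t l. Proof. by case: hK => /(_ l) []. Qed.
Lemma CK1b v : ts (kid v) = t (kid v). Proof. by case: hK => _ [/(_ v) []]. Qed.
Lemma CK2 l m : ksrc l = krng m -> t (kcomp l m) = t l \o t m.
Proof. by case: hK => _ _ h _ _; apply: h. Qed.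
Lemma CK3 l : ts l \o t l = t (kid (ksrc l)). Proof. by case: hK. Qed.

Lemma ts_sub l a b : ts l (a - b) = ts l a - ts l b.
Proof. by apply: (ip_ext hH) => x; rewrite -t_adj !(ipB2 hH) -!t_adj. Qed.

Lemma ts_comp l m : ksrc l = krng m -> forall h, ts (kcomp l m) h = ts m (ts l h).
Proof.
move=> e h; apply: (ip_ext hH) => x.
by rewrite -t_adj CK2 //= t_adj t_adj.
Qed.

Lemma ts_contr l u : ip (ts l u) (ts l u) <= ip u u.
Proof.
pose Q := fun v => t l (ts l v).
have Qi : forall v, Q (Q v) = Q v.
  by move=> v; rewrite /Q; have := congr1 (fun f => f (ts l v)) (t_pi l).
have Qa : adjoint_of ip Q Q.
  move=> a b; rewrite /Q t_adj (ipC hH a) t_adj -ipC //.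
have E : ip (ts l u) (ts l u) = ip (Q u) (Q u).
  by rewrite -(t_adj l (ts l u) u) -/(Q u) -{1}Qi (Qa (Q u) u).
rewrite E; exact: (proj_contr hH Qi Qa u).
Qed.

Lemma lin0 (T : H -> H) : (forall a b, T (a - b) = T a - T b) -> T 0 = 0.
Proof. by move=> TB; have := TB 0 0; rewrite !subrr. Qed.

Lemma PZs_conv b z h : hconv ip (fun j => P (Zs b z j) h) (P [set z] h).
Proof.
rewrite -(Zs_cap b z); apply: (PDEC hH (BL_sa L) hPVM).
  by move=> n; apply: Mcyl.
exact: Zs_dec.
Qed.

Section Fix.
Variables (x : infpath L) (n : NN k).
Let lam := x O0 n.
Let y := shift n x.
Let mu j := y O0 (cNN k j).

Lemma src_lam j : ksrc lam = krng (mu j).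
Proof. exact: ip_src. Qed.

Lemma PZx j h : P (Zs n x j) h = t lam (t (mu j) (ts (mu j) (ts lam h))).
Proof.
rewrite /Zs Pcyl /= ip_comp /= CK2 ?ts_comp //; exact: src_lam.
Qed.

Lemma PZy j h : P (Zs O0 y j) h = t (mu j) (ts (mu j) h).
Proof. by rewrite /Zs add0NN Pcyl. Qed.

Lemma e1 j z : ts lam (t lam (t (mu j) z)) = t (mu j) z.
Proof.
have := congr1 (fun f => f (t (mu j) z)) (CK3 lam); rewrite /= => ->.
rewrite (src_lam j).
have E := CK2 (ksrc_id (krng (mu j))).
by have := congr1 (fun f => f z) E; rewrite /= kcomp_idl => <-.
Qed.

Lemma e2 j z : ts (mu j) (ts lam (t lam z)) = ts (mu j) z.
Proof.
have := congr1 (fun f => f z) (CK3 lam); rewrite /= => ->.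
rewrite (src_lam j) -CK1b -ts_comp ?kcomp_idl //; exact: ksrc_id.
Qed.

Lemma dir1 : P [set y] = zero_op -> P [set x] = zero_op.
Proof.
move=> Py; apply: funext => h; rewrite /zero_op.
have c1 := PZs_conv O0 y (ts lam h); rewrite Py /zero_op in c1.
have [K [K0 hKb]] := bounded_pos hH (t_bnd lam).
have c2 := hconv_lin K0 (lin_sub (t_lin lam)) hKb c1.
have c3 := P_hconv hH hPVM (Msing x) c2.
rewrite (lin0 (lin_sub (t_lin lam))) (lin0 (P_sub hPVM (Msing x))) in c3.
apply/esym; apply: (hconv_ev hH (N0 := 0%N) c3) => j _.
rewrite PZy -PZx -(Psub hPVM (Msing x)) //; first exact: Mcyl.
by move=> z ->; apply/Zs_in.
Qed.

Lemma dir2 : P [set x] = zero_op -> P [set y] = zero_op.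
Proof.
move=> Px; apply: funext => h; rewrite /zero_op.
have c1 := PZs_conv n x (t lam h); rewrite Px /zero_op in c1.
have c2 := hconv_lin (ltr01 : (0 : R[i]) < 1) (ts_sub lam) (fun u => ltac:(rewrite mul1r; exact: ts_contr)) c1.
rewrite (lin0 (ts_sub lam)) in c2.
have c3 := PZs_conv O0 y h.
apply: (hconv_uniq hH c3); apply: hconv_ext c2 => j.
by rewrite PZx PZy e1 e2.
Qed.

End Fix.

Lemma key x n : P [set x] = zero_op <-> P [set shift n x] = zero_op.
Proof. split; [exact: dir2 | exact: dir1]. Qed.

Lemma partA (w g : infpath L) : Orbit w = Orbit g ->
  (P [set w] = zero_op <-> P [set g] = zero_op).
Proof.
move=> E; have : Orbit w g by rewrite E; apply: orbit_refl.
case=> m [l e].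
rewrite (key w l) -e; exact: iff_sym (key g m).
Qed.

End Key.

Definition pick (T : Type) (S : set T) (x0 : T) : T :=
  if pselect (exists x, S x) is left e then proj1_sig (cid e) else x0.
Lemma pick_in T (S : set T) x0 : S x0 -> S (pick S x0).
Proof.
rewrite /pick; case: pselect => [e|ne] // _; exact: (proj2_sig (cid e)).
Qed.
Lemma pick_indep T (S : set T) a b : (exists x, S x) -> pick S a = pick S b.
Proof. by rewrite /pick; case: pselect. Qed.

Theorem corollary3p4 (k : nat) (L : kgraph k) (R : realType)
    (H : lmodType R[i]) (ip : H -> H -> R[i]) (t ts : kMor L -> H -> H)
    (P : set (infpath L) -> H -> H) :
  (0 < k)%N -> row_finite L -> no_sources L ->
  is_hilbert ip -> is_krep ip t ts -> assoc_PVM ip t ts P ->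
  (forall w g : infpath L, Orbit w = Orbit g ->
     (P [set w] = zero_op <-> P [set g] = zero_op))
  /\
  (purely_atomic ip P ->
     let Om := [set w : infpath L | P [set w] <> zero_op] in
     exists Rp : set (infpath L),
       [/\ Rp `<=` Om,
           forall w w', Rp w -> Rp w' -> w <> w' -> Orbit w `&` Orbit w' = set0,
           Om = \bigcup_(w in Rp) Orbit w,
           forall w w', Rp w -> Rp w' -> w <> w' ->
             P (Orbit w) \o P (Orbit w') = zero_op &
           forall h, hsum_to ip Rp (fun w => P (Orbit w) h) h]).
Proof.
move=> _ _ _ hH hK hA; split; first exact: (partA hH hK hA).
move=> [Om' [BOm' POm'c Om'nz Om'sum]] Om.
have hP := hPVM hA.
have sa := BL_sa L.
pose rep (w : infpath L) := pick (Orbit w) w.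
pose Rp := [set w | Om w /\ rep w = w].
have Om_orbit : forall w g, Om w -> Orbit w g -> Om g.
  move=> w g Ow wg; rewrite /Om /= (partA hH hK hA (orbit_eq wg)); exact: Ow.
have rep_in : forall w, Orbit w (rep w) by move=> w; apply: pick_in; apply: orbit_refl.
have rep_eq : forall w w', Orbit w = Orbit w' -> rep w = rep w'.
  move=> w w' E; rewrite /rep E; apply: pick_indep; exists w'; exact: orbit_refl.
have rep_Rp : forall w, Om w -> Rp (rep w).
  move=> w Ow; split; first exact: Om_orbit Ow (rep_in w).
  by apply: rep_eq; apply: orbit_eq; apply: rep_in.
have disj : forall w w', Rp w -> Rp w' -> w <> w' -> Orbit w `&` Orbit w' = set0.
  move=> w w' [_ rw] [_ rw'] ne; apply/seteqP; split => // z [wz w'z]; exfalso; apply: ne.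
  by rewrite -rw -rw'; apply: rep_eq; rewrite -(orbit_eq wz) (orbit_eq w'z).
have Om'Om : Om' `<=` Om by move=> w /Om'nz.
exists Rp; split.
- by move=> w [].
- exact: disj.
- apply/seteqP; split => w.
    move=> Ow; exists (rep w); first exact: rep_Rp.
    exact: orbit_sym (rep_in w).
  by case=> r [Or _] rw; apply: Om_orbit Or rw.
- move=> w w' Rw Rw' ne; rewrite -(PI hP (Morbit w) (Morbit w')) (disj _ _ Rw Rw' ne).
  by case: hP => _ [_ ->].
move=> h eps e0.
have [s0' [nd0 in0 H0]] := Om'sum h eps e0.
pose deq := fun a b : infpath L => pselect (a = b).
exists (List.nodup deq (map rep s0')); split.
- exact: List.NoDup_nodup.
- move=> i /List.nodup_In /List.in_map_iff [w [<- ws]].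
  by apply: rep_Rp; apply: Om'Om; apply: in0.
move=> s nds sRp s0s.
have E1 : \sum_(i <- s) P (Orbit i) h = P (Ufold (@Orbit k L) s) h.
  apply: (PUfold hH sa hP) => //; first by move=> i _; apply: Morbit.
  by move=> i j si sj; apply: disj; apply: sRp.
have MU : borel_path L (Ufold (@Orbit k L) s) by apply: (MUfold sa) => i _; apply: Morbit.
pose V := Ufold (fun w => [set w]) s0'.
have MV : borel_path L V by apply: (MUfold sa) => i _; apply: Msing.
have E2 : \sum_(i <- s0') P [set i] h = P V h.
  apply: (PUfold hH sa hP (f := fun w => [set w])) => //; first by move=> i _; apply: Msing.
  move=> i j _ _ ne; apply/seteqP; split => // z [zi zj]; apply: ne; by rewrite -zi -zj.
have := H0 s0' nd0 in0 (fun i hi => hi); rewrite /= E2.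
have -> : P V h - h = - P (~` V) h by rewrite (PC hH sa hP MV) opprB.
rewrite (ipNN hH) => hV.
rewrite /= E1.
have -> : P (Ufold (@Orbit k L) s) h - h = - P (~` Ufold (@Orbit k L) s) h by rewrite (PC hH sa hP MU) opprB.
rewrite (ipNN hH).
have VU : ~` Ufold (@Orbit k L) s `<=` ~` V.
  apply: subsetC => z /Ufold_in [w [ws /= ->]].
  apply/Ufold_in; exists (rep w); split; last exact: orbit_sym (rep_in w).
  apply: s0s; apply/List.nodup_In; apply/List.in_map_iff; by exists w.
rewrite (Psub hP (MC sa MU) (MC sa MV) VU).
exact: le_lt_trans (P_contr hH hP (MC sa MU) _) hV.
Qed.
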